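(* Consider the APT–DIFT game described in the context and suppose the information flow graph $\mathcal G$ is acyclic, with $N$ nodes. Then, under any strategy pair $(p_A,p_D)$, the state space of the APT–DIFT game is acyclic (the directed graph on $\mathbf S$ having an edge $s\to s'$ whenever $P(s,a,d,s')>0$ for some $a\in\mathcal A_A(s)$, $d\in\mathcal A_D(s)$ has no directed cycle), and the game terminates in at most $N+4$ steps, i.e. $T\le N+4$.
   Context: Let $\mathcal G=(V_{\mathcal G},E_{\mathcal G})$ be a finite directed graph (the information flow graph) with $V_{\mathcal G}=\{v_1,\dots,v_N\}$, let $\lambda\subset V_{\mathcal G}$ be a set of entry points and $\mathcal D=\{v_1,\dots,v_q\}\subset V_{\mathcal G}$ a destination set, $FN,FP:V_{\mathcal G}\to(0,1)$ and $\beta>0$. The APT–DIFT game is a two-player stochastic game with state space $\mathbf S=\{v_0,v_1,\dots,v_N,\phi,\tau_A,\tau_B\}$ and initial state $v_0$; the states in $\{\phi,\tau_A,\tau_B\}\cup\mathcal D$ are absorbing with empty action sets, and the game terminates (at time $T$) when an absorbing state is reached. At $v_0$: $\mathcal A_A(v_0)=\lambda$, $\mathcal A_D(v_0)=\{0\}$. At a non-absorbing $s=v_i\in V_{\mathcal G}$: $\mathcal A_A(s)=\{\phi\}\cup\{v_j:(v_i,v_j)\in E_{\mathcal G}\}$, $\mathcal A_D(s)=\{0\}\cup\{v_j:(v_i,v_j)\in E_{\mathcal G}\}$. Transition probabilities $P(s,a,d,s')$: if $d=0$, $s'=a$ with probability $1$; if $d=a$, $s'=a$ with probability $FN(d)$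 and $s'=\tau_A$ with probability $1-FN(d)$; if $d\ne0$ and $d\neq a$, $s'=\tau_B$ with probability $FP(d)$ and $s'=a$ with probability $1-FP(d)$. Strategies are stationary mixed strategies assigning to each non-absorbing state a distribution over the player's actions there. *)

(* Defs.v *)
From HB Require Import structures.
From mathcomp Require Import all_boot all_order all_algebra.
Set Implicit Arguments. Unset Strict Implicit. Unset Printing Implicit Defensive.
Import Order.TTheory GRing.Theory Num.Theory.
Local Open Scope ring_scope.

Inductive state (V : finType) : Type :=
  | Init | Node of V | Phi | TauA | TauB.
Arguments Init {V}. Arguments Phi {V}. Arguments TauA {V}. Arguments TauB {V}.

Section StateFin.
Variable V : finType.
Definition state_enc (s : state V) : option (V + 'I_4) :=
  match s with
  | Init => None
  | Node v => Some (inl v)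
  | Phi => Some (inr (@Ordinal 4 0 isT))
  | TauA => Some (inr (@Ordinal 4 1 isT))
  | TauB => Some (inr (@Ordinal 4 2 isT))
  end.
Definition state_dec (x : option (V + 'I_4)) : option (state V) :=
  match x with
  | None => Some Init
  | Some (inl v) => Some (Node v)
  | Some (inr i) =>
      match val i with 0 => Some Phi | 1 => Some TauA | 2 => Some TauB | _ => None end
  end.
Lemma state_encK : pcancel state_enc state_dec. Proof. by case. Qed.
HB.instance Definition _ := Finite.copy (state V) (pcan_type state_encK).
End StateFin.

(* Attacker actions: None = phi (drop out), Some v = move to v.
   Defender actions: None = 0 (no trap), Some v = trap on v. *)
Section Game.
Variables (R : realFieldType) (V : finType) (E : rel V)
          (lambda D : {set V}) (FN FP : V -> R).

Definition absorbing (s : state V) : bool :=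
  match s with
  | Init => false
  | Node v => v \in D
  | _ => true
  end.

Definition AA (s : state V) : {set option V} :=
  match s with
  | Init => [set Some v | v in lambda]
  | Node v => if v \in D then set0 else None |: [set Some w | w in [set w | E v w]]
  | _ => set0
  end.

Definition AD (s : state V) : {set option V} :=
  match s with
  | Init => [set None]
  | Node v => if v \in D then set0 else None |: [set Some w | w in [set w | E v w]]
  | _ => set0
  end.

Definition act_target (a : option V) : state V :=
  match a with None => Phi | Some v => Node v end.

Definition trans (s : state V) (a d : option V) (s' : state V) : R :=
  match d with
  | None => (s' == act_target a)%:R
  | Some w =>
      if d == a then
        (s' == act_target a)%:R * FN w + (s' == TauA)%:R * (1 - FN w)
      else
        (s' == TauB)%:R * FP w + (s' == act_target a)%:R * (1 - FP w)
  end.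

Definition sedge (s s' : state V) : bool :=
  [exists a, exists d, [&& a \in AA s, d \in AD s & 0 < trans s a d s']].

Definition strategy (A : state V -> {set option V}) (p : state V -> option V -> R) :=
  forall s, ~~ absorbing s ->
    [/\ forall a, 0 <= p s a,
        forall a, a \notin A s -> p s a = 0
      & \sum_(a in A s) p s a = 1].

(* one-step transition kernel of the game under (pA, pD); absorbing states
   stay put (the game has terminated) *)
Definition step (pA pD : state V -> option V -> R) (s s' : state V) : R :=
  if absorbing s then (s == s')%:R
  else \sum_a \sum_d pA s a * pD s d * trans s a d s'.

Fixpoint dist (pA pD : state V -> option V -> R) (n : nat) (s' : state V) : R :=
  match n with
  | 0 => (s' == Init)%:R
  | n.+1 => \sum_s dist pA pD n s * step pA pD s s'
  end.
End Game.

Definition acyclic (T : finType) (e : rel T) : Prop :=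
  forall (x : T) (p : seq T), p != [::] -> path e x p -> last x p != x.

(* Main.v *)
Require Import Defs.
From HB Require Import structures.
From mathcomp Require Import all_boot all_order all_algebra.
Import Order.TTheory GRing.Theory Num.Theory.
Local Open Scope ring_scope.

Set Implicit Arguments.
Section Aux.
Variables (R : realFieldType) (V : finType) (E : rel V)
          (lambda D : {set V}) (FN FP : V -> R).

Lemma trans_neq0 s a d s' : trans FN FP s a d s' != 0 ->
  [\/ s' = act_target a, s' = TauA | s' = TauB].
Proof.
rewrite /trans; case: d => [w|]; last first.
  by case: (s' =P act_target a) => [->|_]; [constructor|rewrite eqxx].
case: ifP => _.
  case: (s' =P act_target a) => [->|_]; first by constructor.
  case: (s' =P TauA) => [->|_]; first by constructor.
  by rewrite !mul0r addr0 eqxx.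
case: (s' =P act_target a) => [->|_]; first by constructor.
case: (s' =P TauB) => [->|_]; first by constructor.
by rewrite !mul0r addr0 eqxx.
Qed.

Lemma sedge_inv s s' : sedge E lambda D FN FP s s' ->
  exists2 a, a \in AA E lambda D s & [\/ s' = act_target a, s' = TauA | s' = TauB].
Proof.
case/existsP=> a /existsP [d /and3P [Ha Hd Ht]].
exists a => //; apply: (@trans_neq0 s a d).
by rewrite gt_eqF.
Qed.

Lemma sedge_Init s : ~~ sedge E lambda D FN FP s Init.
Proof. by apply/negP => /sedge_inv [a _]; case: a => [?|] [] //. Qed.

Lemma sedge_abs s s' : sedge E lambda D FN FP s s' -> ~~ absorbing D s.
Proof.
case/sedge_inv=> a; case: s => //= [v|||]; try by rewrite inE.
by case: (v \in D); rewrite ?inE.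
Qed.

Lemma sedge_Node v w : sedge E lambda D FN FP (Node v) (Node w) -> E v w.
Proof.
case/sedge_inv=> a /=; case: ifP => [_|vD]; first by rewrite inE.
move=> Ha [|//|//]; case: a Ha => //= w' Ha [->].
move: Ha; rewrite !inE /= mem_imset; last by move=> ?? [].
by rewrite inE.
Qed.

Lemma path_abs y p : path (sedge E lambda D FN FP) y p -> absorbing D y -> p = [::].
Proof. by case: p => //= z p /andP [/sedge_abs /negP]. Qed.

Lemma path_Init x p : path (sedge E lambda D FN FP) x p -> last x p = Init -> p = [::].
Proof.
elim: p x => //= y p IH x /andP [Hxy Hp] Hl.
have := IH _ Hp Hl => Ep; subst p.
by move: Hxy; rewrite /= in Hl; rewrite Hl (negbTE (sedge_Init _)).
Qed.

Lemma path_Node p v u : path (sedge E lambda D FN FP) (Node v) p ->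
  last (Node v) p = Node u ->
  exists q, [/\ path E v q, last v q = u & size q = size p].
Proof.
elim: p v => [|y p IH] v /=.
  by move=> _ [<-]; exists [::].
case/andP=> Hxy Hp Hl.
case: y Hxy Hp Hl => [|w|||].
- by rewrite (negbTE (sedge_Init _)).
- move=> Hxy Hp Hl; have [q [Hq Hlq Hs]] := IH _ Hp Hl.
  by exists (w :: q); rewrite /= Hq (@sedge_Node v w Hxy) Hlq Hs.
- by move=> _ Hp; rewrite (path_abs _ _ Hp isT).
- by move=> _ Hp; rewrite (path_abs _ _ Hp isT).
- by move=> _ Hp; rewrite (path_abs _ _ Hp isT).
Qed.

Lemma acyc_uniq x p : acyclic E -> path E x p -> uniq (x :: p).
Proof.
move=> Hac; elim: p x => [|y p IH] x //= /andP [Hxy Hp].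
have Hu := IH _ Hp; rewrite /= in Hu; rewrite Hu andbT.
apply/negP => Hin.
have Hpy : path E x (y :: p) by rewrite /= Hxy.
move: Hpy; case/splitPr: Hin => p1 p2.
rewrite cat_path /= => /andP [H1 /andP [H2 _]].
have H : path E x (rcons p1 x) by rewrite rcons_path H1.
have := Hac x (rcons p1 x); rewrite last_rcons eqxx -size_eq0 size_rcons /=.
by move/(_ isT H).
Qed.

Lemma sum_neq0 (I : finType) (F : I -> R) : \sum_i F i != 0 -> exists i, F i != 0.
Proof.
move=> H; case: (boolP [exists i, F i != 0]) => [/existsP //|/existsPn Hn].
by move: H; rewrite big1 ?eqxx // => i _; apply/eqP; move: (Hn i); rewrite negbK.
Qed.

End Aux.
Arguments path_Init {R V E lambda D FN FP x p}.
Arguments path_Node {R V E lambda D FN FP p v u}.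
Arguments sedge_abs {R V E lambda D FN FP s s'}.
Arguments trans_neq0 {R V FN FP s a d s'}.
Arguments acyc_uniq {V E x p}.
Arguments sum_neq0 {R I F}.
Unset Implicit Arguments.

Theorem theorem4 (R : realFieldType) (V : finType) (E : rel V)
  (lambda D : {set V}) (FN FP : V -> R) (beta : R) :
  (forall v, 0 < FN v < 1) -> (forall v, 0 < FP v < 1) -> 0 < beta ->
  acyclic E ->
  forall pA pD : state V -> option V -> R,
    strategy D (AA E lambda D) pA -> strategy D (AD E D) pD ->
    acyclic (sedge E lambda D FN FP) /\
    (* P(T > N+4) = 0: with probability one an absorbing state has been
       reached by time N + 4, where N = #|V| *)
    (forall s, ~~ absorbing D s -> dist D FN FP pA pD (#|V| + 4) s = 0).
Proof.
move=> _ _ _ Hac pA pD HA HD; split.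
  move=> x p Hp0 Hp; apply/negP => /eqP Hl.
  case: x Hp Hl => [|v|||].
  - by move=> Hp /(path_Init Hp) Ep; rewrite Ep in Hp0.
  - move=> Hp Hl; have [q [Hq Hlq Hs]] := path_Node Hp Hl.
    have Hq0 : q != [::].
      by apply: contra Hp0 => /eqP q0; rewrite -size_eq0 -Hs q0.
    by move: (Hac v q Hq0 Hq); rewrite Hlq eqxx.
  - by case: p Hp0 => // y p _ /= /andP [/sedge_abs].
  - by case: p Hp0 => // y p _ /= /andP [/sedge_abs].
  - by case: p Hp0 => // y p _ /= /andP [/sedge_abs].
have key : forall n s', ~~ absorbing D s' -> dist D FN FP pA pD n s' != 0 ->
  (s' = Init /\ n = 0%N) \/
  exists v p, [/\ s' = Node (last v p), path E v p & n = (size p).+1].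
  elim=> [|n IH] s' Hs' /=.
    by case: (s' =P Init) => [->|_]; [left | rewrite eqxx].
  case/sum_neq0 => s; rewrite mulf_eq0 negb_or => /andP [Hd Hst].
  have Hsabs : ~~ absorbing D s.
    apply: contra Hst => Habs; rewrite /step Habs.
    case: (s =P s') => [Es|_]; last by rewrite eqxx.
    by rewrite -Es Habs in Hs'.
  rewrite /step (negbTE Hsabs) in Hst.
  case/sum_neq0: Hst => a /sum_neq0 [d].
  rewrite !mulf_eq0 !negb_or => /andP [/andP [Ha _] Ht].
  have [_ Hout _] := HA s Hsabs.
  have HaA : a \in AA E lambda D s.
    by apply: contraR Ha => /(Hout a) ->; rewrite eqxx.
  have [Es'|Es'|Es'] := trans_neq0 Ht; last 2 first.
  - by rewrite Es' in Hs'.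
  - by rewrite Es' in Hs'.
  case: a Es' HaA {Ha Ht} => [w|]; last by move=> Es'; rewrite Es' in Hs'.
  move=> /= Es' HaA; right.
  case: (IH s Hsabs Hd) => [[Es ->]|[v [p [Es Hp ->]]]].
    by exists w, [::]; rewrite Es'.
  exists v, (rcons p w); rewrite last_rcons size_rcons Es' rcons_path Hp; split => //.
  move: HaA Hsabs; rewrite Es /=; case: ifP => // _ HaA _.
  move: HaA; rewrite !inE /= mem_imset; last by move=> ?? [].
  by rewrite inE.
move=> s Hs; apply/eqP; apply: contraT => Hne.
case: (key _ _ Hs Hne) => [[_ H0]|]; first by rewrite addn4 in H0.
case=> v [p [_ Hp Hsz]].
have := card_uniqP (acyc_uniq Hac Hp) => Hc.
have := max_card (mem (v :: p)).
rewrite Hc /= -Hsz => H.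
by move: H; rewrite -{2}(addn0 #|V|) leq_add2l.
Qed.
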